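(* Let $(A,\mu_A)$, $(B,\mu_B)$ be associative algebras, $\alpha_A:A\to A$, $\alpha_B:B\to B$ bijective algebra endomorphisms, and $R:B\otimes A\to A\otimes B$ an $(\alpha_A,\alpha_B)$-twisting map, written $R(b\otimes a)=a_R\otimes b_R$. Then the linear map $T:(A\otimes B)\otimes(A\otimes B)\to(A\otimes B)\otimes(A\otimes B)$, $T((a\otimes b)\otimes(a'\otimes b'))=(\alpha_A(a)\otimes b_R)\otimes(a'_R\otimes\alpha_B(b'))$, is an $(\alpha_A\otimes\alpha_B)$-pseudotwistor for the associative tensor product algebra $A\otimes B$, with companions $\tilde T_1=T_{13}\circ(\alpha_A^{-1}\otimes\alpha_B^{-1}\otimes\mathrm{id}_A\otimes\mathrm{id}_B\otimes\mathrm{id}_A\otimes\mathrm{id}_B)$ and $\tilde T_2=T_{13}\circ(\mathrm{id}_A\otimes\mathrm{id}_B\otimes\mathrm{id}_A\otimes\mathrm{id}_B\otimes\alpha_A^{-1}\otimes\alpha_B^{-1})$. The resulting Hom-associative algebra $(A\otimes B)^T_{\alpha_A\otimes\alpha_B}$ has multiplication $(a\otimes b)(a'\otimes b')=\alpha_A(a)a'_R\otimes b_R\alpha_B(b')$ and structure map $\alpha_A\otimes\alpha_B$.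
   Context: Over a field $k$; algebras not assumed unital; $A\otimes B$ has product $(a\otimes b)(a'\otimes b')=aa'\otimes bb'$. An $(\alpha_A,\alpha_B)$-twisting map is a linear $R:B\otimes A\to A\otimes B$ with $(\alpha_A\otimes\alpha_B)\circ R=R\circ(\alpha_B\otimes\alpha_A)$, $R\circ(\mathrm{id}_B\otimes\mu_A)=(\mu_A\otimes\mathrm{id}_B)\circ(\mathrm{id}_A\otimes R)\circ(\mathrm{id}_A\otimes\alpha_B^{-1}\otimes\mathrm{id}_A)\circ(R\otimes\mathrm{id}_A)$, $R\circ(\mu_B\otimes\mathrm{id}_A)=(\mathrm{id}_A\otimes\mu_B)\circ(R\otimes\mathrm{id}_B)\circ(\mathrm{id}_B\otimes\alpha_A^{-1}\otimes\mathrm{id}_B)\circ(\mathrm{id}_B\otimes R)$. For an associative algebra $(D,\mu)$ with algebra endomorphism $\alpha$, an $\alpha$-pseudotwistor with companions $\tilde T_1,\tilde T_2$ is a linear $T:D\otimes D\to D\otimes D$ with linear $\tilde T_1,\tilde T_2:D^{\otimes3}\to D^{\otimes3}$ satisfying $(\alpha\otimes\alpha)\circ T=T\circ(\alpha\otimes\alpha)$, $T\circ(\mathrm{id}_D\otimes\mu)=(\mathrm{id}_D\otimes\mu)\circ\tilde T_1\circ(T\otimes\mathrm{id}_D)$, $T\circ(\mu\otimes\mathrm{id}_D)=(\mu\otimes\mathrm{id}_D)\circ\tilde T_2\circ(\mathrm{id}_D\otimes T)$, $\tilde T_1\circ(T\otimes\mathrm{id}_D)\circ(\alpha\otimes T)=\tilde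 T_2\circ(\mathrm{id}_D\otimes T)\circ(T\otimes\alpha)$; then $D^T_\alpha:=(D,\mu\circ T,\alpha)$ is Hom-associative ($\alpha(xy)=\alpha(x)\alpha(y)$, $\alpha(x)(yz)=(xy)\alpha(z)$). For $T$ written $T(d\otimes d')=d^T\otimes d'_T$ ($d,d'\in D=A\otimes B$), $T_{13}(d\otimes d'\otimes d'')=d^T\otimes d'\otimes d''_T$. *)

(* Defs.v *)
(* Tensor products of K-vector spaces are given by their
   universal property. *)
From HB Require Import structures.
From mathcomp Require Import all_boot all_algebra.

Set Implicit Arguments.
Unset Strict Implicit.
Unset Printing Implicit Defensive.

Import GRing.Theory.
Local Open Scope ring_scope.

Definition bilin (K : fieldType) (U V X : lmodType K) (f : U -> V -> X) : Prop :=
  (forall u, linear (f u)) /\ (forall v, linear (fun u => f u v)).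

Record tensor_product (K : fieldType) (U V : lmodType K) := TensorProduct {
  tcar : lmodType K;
  tens : U -> V -> tcar;
  tens_bilin : bilin tens;
  tlift : forall X : lmodType K, (U -> V -> X) -> tcar -> X;
  tlift_linear : forall (X : lmodType K) (f : U -> V -> X),
      bilin f -> linear (tlift f);
  tlift_tens : forall (X : lmodType K) (f : U -> V -> X),
      bilin f -> forall u v, tlift f (tens u v) = f u v;
  tens_ext : forall (X : lmodType K) (g h : tcar -> X),
      linear g -> linear h -> (forall u v, g (tens u v) = h (tens u v)) ->
      g =1 h
}.

Definition tensor_functor (K : fieldType) :=
  forall U V : lmodType K, tensor_product U V.

Section TensorOps.
Unset Implicit Arguments.
Context {K : fieldType} (tp : tensor_functor K).

Definition tT (U V : lmodType K) : lmodType K := tcar (tp U V).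
Definition tns {U V : lmodType K} (u : U) (v : V) : tT U V := tens (tp U V) u v.
Definition tlft {U V X : lmodType K} (f : U -> V -> X) : tT U V -> X :=
  @tlift K U V (tp U V) X f.
Definition tmap {U V U' V' : lmodType K} (f : U -> U') (g : V -> V') :
  tT U V -> tT U' V' := tlft (fun u v => tns (f u) (g v)).
Definition tassoc {U V W : lmodType K} : tT (tT U V) W -> tT U (tT V W) :=
  tlft (fun x w => tlft (fun u v => tns u (tns v w)) x).
Definition tassocV {U V W : lmodType K} : tT U (tT V W) -> tT (tT U V) W :=
  tlft (fun u y => tlft (fun v w => tns (tns u v) w) y).
Definition tlft22 {U V W Z X : lmodType K} (f : U -> V -> W -> Z -> X) :
  tT (tT U V) (tT W Z) -> X :=
  tlft (fun x y => tlft (fun u v => tlft (fun w z => f u v w z) y) x).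

Definition assoc_alg {A : lmodType K} (mu : tT A A -> A) : Prop :=
  linear mu /\ mu \o tmap mu id =1 mu \o tmap id mu \o tassoc.

Definition alg_endo {A : lmodType K} (mu : tT A A -> A) (alpha : A -> A) : Prop :=
  linear alpha /\ alpha \o mu =1 mu \o tmap alpha alpha.

(* (alphaA, alphaB)-twisting map R : B ⊗ A -> A ⊗ B; triple tensor products
   are bracketed on the left, (X ⊗ Y) ⊗ Z, and associators are inserted. *)
Definition twisting_map {A B : lmodType K}
  (muA : tT A A -> A) (muB : tT B B -> B)
  (alphaA alphaAi : A -> A) (alphaB alphaBi : B -> B)
  (R : tT B A -> tT A B) : Prop :=
  [/\ linear R,
      tmap alphaA alphaB \o R =1 R \o tmap alphaB alphaA,
      R \o tmap id muA \o tassoc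
        =1 tmap muA id \o tassocV \o tmap id R \o tassoc
           \o tmap (tmap id alphaBi) id \o tmap R id
    &
      R \o tmap muB id
        =1 tmap id muB \o tassoc \o tmap R id \o tassocV
           \o tmap id (tmap alphaAi id) \o tmap id R \o tassoc].

Definition pseudotwistor {D : lmodType K} (mu : tT D D -> D) (alpha : D -> D)
  (T : tT D D -> tT D D) (T1 T2 : tT (tT D D) D -> tT (tT D D) D) : Prop :=
  [/\ linear T /\ linear T1 /\ linear T2,
      tmap alpha alpha \o T =1 T \o tmap alpha alpha,
      T \o tmap id mu \o tassoc =1 tmap id mu \o tassoc \o T1 \o tmap T id,
      T \o tmap mu id =1 tmap mu id \o T2 \o tassocV \o tmap id T \o tassoc
    &
      T1 \o tmap T id \o tassocV \o tmap alpha T \o tassoc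
        =1 T2 \o tassocV \o tmap id T \o tassoc \o tmap T alpha].

Definition hom_assoc {D : Type} (m : D -> D -> D) (alpha : D -> D) : Prop :=
  (forall x y, alpha (m x y) = m (alpha x) (alpha y)) /\
  (forall x y z, m (alpha x) (m y z) = m (m x y) (alpha z)).

Definition tensor_alg_mul {A B : lmodType K} (muA : tT A A -> A) (muB : tT B B -> B) :
  tT (tT A B) (tT A B) -> tT A B :=
  tlft22 (fun a b a' b' => tns (muA (tns a a')) (muB (tns b b'))).

Definition twT {A B : lmodType K} (alphaA : A -> A) (alphaB : B -> B)
  (R : tT B A -> tT A B) : tT (tT A B) (tT A B) -> tT (tT A B) (tT A B) :=
  tlft22 (fun a b a' b' =>
    tlft (fun (x : A) (y : B) => tns (tns (alphaA a) y) (tns x (alphaB b')))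
         (R (tns b a'))).

Definition T13 {D : lmodType K} (T : tT D D -> tT D D) :
  tT (tT D D) D -> tT (tT D D) D :=
  tlft (fun p d'' => tlft (fun d d' =>
          tlft (fun e e'' => tns (tns e d') e'') (T (tns d d''))) p).

End TensorOps.

(* Main.v *)
Require Import Defs.
From HB Require Import structures.
From mathcomp Require Import all_boot all_algebra.
Set Implicit Arguments. Unset Strict Implicit. Unset Printing Implicit Defensive.
Import GRing.Theory.
Local Open Scope ring_scope.

Section Lib.
Context {K : fieldType} (tp : tensor_functor K).

Lemma lin_id (U : lmodType K) : linear (fun x : U => x).
Proof. by []. Qed.

Lemma lin_comp (U V W : lmodType K) (f : V -> W) (g : U -> V) :
  linear f -> linear g -> linear (fun x => f (g x)).
Proof. by move=> lf lg a u v; rewrite lg lf. Qed.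

Lemma lin_tnsl (U V : lmodType K) (v : V) : linear (fun u : U => tns tp u v).
Proof. exact: (proj2 (tens_bilin (tp U V))). Qed.

Lemma lin_tnsr (U V : lmodType K) (u : U) : linear (@tns K tp U V u).
Proof. exact: (proj1 (tens_bilin (tp U V))). Qed.

Lemma lin_tlft (U V X : lmodType K) (f : U -> V -> X) : bilin f -> linear (tlft tp f).
Proof. exact: tlift_linear. Qed.

Lemma tlftE (U V X : lmodType K) (f : U -> V -> X) : bilin f ->
  forall u v, tlft tp f (tns tp u v) = f u v.
Proof. exact: tlift_tens. Qed.

Lemma extT (U V X : lmodType K) (g h : tT tp U V -> X) :
  linear g -> linear h -> (forall u v, g (tns tp u v) = h (tns tp u v)) ->
  forall t, g t = h t.
Proof. exact: tens_ext. Qed.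

Lemma lin_param (W U V X : lmodType K) (F : W -> U -> V -> X) (t : tT tp U V) :
  (forall w, bilin (F w)) -> (forall u v, linear (fun w => F w u v)) ->
  linear (fun w => tlft tp (F w) t).
Proof.
move=> bF lF a w1 w2; move: t; apply: extT.
- exact: lin_tlft.
- move=> c u v; rewrite !(lin_tlft (bF _)).
  rewrite !scalerDr !scalerA mulrC -!scalerA -!addrA; congr (_ + _).
  by rewrite addrCA.
- by move=> u v; rewrite !tlftE // lF.
Qed.

End Lib.

Ltac lin :=
  match goal with
  | |- @GRing.linear_for _ _ _ _ (fun x => x) => apply: lin_id
  | |- @GRing.linear_for _ _ _ _ (fun x => ?phi (@?g x)) =>
      apply: (@lin_comp _ _ _ _ phi g); [lin_closed | lin]
  | |- @GRing.linear_for _ _ _ _ (fun x => @tns _ _ _ _ (@?g x) ?v) =>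
      apply: (lin_comp (lin_tnsl _ v) (g:=g)); lin
  | |- @GRing.linear_for _ _ _ _ (fun x => @tlft _ _ _ _ _ (@?F x) ?t) =>
      apply: (@lin_param _ _ _ _ _ _ F t); [intro; cbv beta; bil | intros; cbv beta; lin]
  | |- @GRing.linear_for _ _ _ _ ?phi => lin_closed
  end
with bil := split; intros; cbv beta; lin
with lin_closed := first [assumption | apply: lin_tnsr | apply: lin_tlft; bil].

Ltac ev rules := repeat (first [rewrite tlftE; [|bil] | rewrite rules]); cbv beta.
Ltac gen R rules := match goal with |- context [R ?w] =>
  generalize (R w); apply extT; [solve [lin] | solve [lin] | intros; ev rules] end.
Ltac exts rules := repeat intro; cbv beta; repeat match goal with
  | x : GRing.Lmodule.sort (tT _ _ _) |- _ => revert x; apply extT; [solve [lin]|solve [lin]|intros; ev rules] end.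
Tactic Notation "ext2" ident(x) ident(y) :=
  apply extT; [solve [lin] | solve [lin] | intros x y; cbv beta].

Unset Implicit Arguments.
Local Close Scope ring_scope.

Theorem proposition4p4 (K : fieldType) (tp : tensor_functor K)
  (A B : lmodType K) (muA : tT tp A A -> A) (muB : tT tp B B -> B)
  (alphaA alphaAi : A -> A) (alphaB alphaBi : B -> B)
  (R : tT tp B A -> tT tp A B) :
  assoc_alg tp muA -> assoc_alg tp muB ->
  alg_endo tp muA alphaA -> alg_endo tp muB alphaB ->
  cancel alphaA alphaAi -> cancel alphaAi alphaA ->
  cancel alphaB alphaBi -> cancel alphaBi alphaB ->
  twisting_map tp muA muB alphaA alphaAi alphaB alphaBi R ->
  let muD := tensor_alg_mul tp muA muB in
  let alpha := tmap tp alphaA alphaB in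
  let T := twT tp alphaA alphaB R in
  pseudotwistor tp muD alpha T
    (T13 tp T \o tmap tp (tmap tp (tmap tp alphaAi alphaBi) id) id)
    (T13 tp T \o tmap tp (tmap tp id id) (tmap tp alphaAi alphaBi))
  /\ hom_assoc (fun x y => muD (T (tns tp x y))) alpha
  /\ (forall (a a' : A) (b b' : B),
        muD (T (tns tp (tns tp a b) (tns tp a' b')))
        = tlft tp (fun (x : A) (y : B) =>
                     tns tp (muA (tns tp (alphaA a) x)) (muB (tns tp y (alphaB b'))))
               (R (tns tp b a'))).
Proof.
move=> [lmuA assA] [lmuB assB] [laA endA] [laB endB] cA cAi cB cBi [lR R1 R2 R3].
move=> muD alpha T.
have laAi : linear alphaAi.
  by move=> k u v; apply: (can_inj cA); rewrite laA !cAi.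
have laBi : linear alphaBi.
  by move=> k u v; apply: (can_inj cB); rewrite laB !cBi.
have assA' : forall x y z, muA (tns tp (muA (tns tp x y)) z) = muA (tns tp x (muA (tns tp y z))).
  move=> x y z; have := assA (tns tp (tns tp x y) z).
  by rewrite /comp /tmap /tassoc /id; ev tt.
have assB' : forall x y z, muB (tns tp (muB (tns tp x y)) z) = muB (tns tp x (muB (tns tp y z))).
  move=> x y z; have := assB (tns tp (tns tp x y) z).
  by rewrite /comp /tmap /tassoc /id; ev tt.
have endA' : forall x y, alphaA (muA (tns tp x y)) = muA (tns tp (alphaA x) (alphaA y)).
  move=> x y; have := endA (tns tp x y).
  by rewrite /comp /tmap; ev tt.
have endB' : forall x y, alphaB (muB (tns tp x y)) = muB (tns tp (alphaB x) (alphaB y)).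
  move=> x y; have := endB (tns tp x y).
  by rewrite /comp /tmap; ev tt.
have R1' : forall b a, R (tns tp (alphaB b) (alphaA a)) = tmap tp alphaA alphaB (R (tns tp b a)).
  move=> b a; have := R1 (tns tp b a).
  by rewrite /comp /tmap; ev tt.
have R2' : forall b a a', R (tns tp b (muA (tns tp a a'))) =
   (tmap tp muA id \o tassocV tp \o tmap tp id R \o tassoc tp
           \o tmap tp (tmap tp id alphaBi) id \o tmap tp R id) (tns tp (tns tp b a) a').
  move=> b a a'; rewrite -R2 /comp.
  by rewrite /tmap /tassoc /id; ev tt.
have R3' : forall b b' a, R (tns tp (muB (tns tp b b')) a) =
  (tmap tp id muB \o tassoc tp \o tmap tp R id \o tassocV tp
           \o tmap tp id (tmap tp alphaAi id) \o tmap tp id R \o tassoc tp) (tns tp (tns tp b b') a).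
  move=> b b' a; rewrite -R3 /comp.
  by rewrite /tmap /id; ev tt.
rewrite /comp /tmap /tassoc /tassocV /id in R1' R2' R3'.
rewrite /pseudotwistor /hom_assoc /muD /alpha /T /tensor_alg_mul /twT /T13 /tmap /tassoc /tassocV /tlft22 /comp /id.
pose rules := (R1', R2', R3', assA', assB', endA', endB', cA, cAi, cB, cBi).
split; first split.
- split; [lin | split; lin].
- by exts rules; repeat gen R rules.
- by exts rules; repeat gen R rules.
- by exts rules; repeat gen R rules.
- move=> w; cbv beta; move: w; ext2 p d''; move: d''; ext2 a'' b''.
  move: p; ext2 d d'; move: d'; ext2 a' b'; move: d; ext2 a b.
  ev rules.
  transitivity (tlft tp (fun (x2 : A) (y2 : B) => tlft tp (fun (x1 : A) (y1 : B) =>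
     tlft tp (fun (x3 : A) (y3 : B) =>
       tns tp (tns tp (tns tp (alphaA (alphaA a)) y3) (tns tp (alphaA x2) (alphaB y1)))
              (tns tp x3 (alphaB (alphaB b''))))
     (R (tns tp y2 x1))) (R (tns tp b' a''))) (R (tns tp b a'))).
  + by repeat gen R rules.
  + by repeat gen R rules.
- split; first split.
  + by exts rules; repeat gen R rules.
  + move=> x y z; move: z; ext2 a'' b''; move: y; ext2 a' b'; move: x; ext2 a b.
    ev rules.
    transitivity (tlft tp (fun (x2 : A) (y2 : B) => tlft tp (fun (x1 : A) (y1 : B) =>
     tlft tp (fun (x3 : A) (y3 : B) =>
       tns tp (muA (tns tp (alphaA (alphaA a)) (muA (tns tp (alphaA x2) x3))))
              (muB (tns tp y3 (muB (tns tp (alphaB y1) (alphaB (alphaB b'')))))))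
     (R (tns tp y2 x1))) (R (tns tp b' a''))) (R (tns tp b a'))).
    * by repeat gen R rules.
    * by repeat gen R rules.
  + by move=> a a' b b'; ev rules; repeat gen R rules.
Qed.
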